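(* Let $n \geq 8$ and $P \in \mathrm{PLS}(2,3;n)$. If $P$ is not completely reduced, then the $(1,2)$-row-permutation of $P$ has a cycle of length at least $3$ whose cycle type is equivalent to a sequence containing two adjacent zeros (i.e. the cycle contains two cyclically consecutive elements neither of which lies in $\{P(1,1),P(1,2),P(1,3)\}$).
   Context: $\mathrm{PLS}(2,3;n)$ denotes the set of $n\times n$ partial Latin squares on symbols $\{1,\dots,n\}$ (each cell empty or containing one symbol, no symbol repeated in a row or column) in which rows $1,2$ and columns $1,2,3$ are completely filled and all other cells are empty. The $(1,2)$-row-permutation of $P$ is the permutation $\sigma$ of $\{1,\dots,n\}$ with $\sigma(P(1,i))=P(2,i)$ for all $i$. For a cycle $(a_1\,\dots\,a_m)$ in the disjoint cycle representation of $\sigma$, its cycle type is the $0/1$ sequence of length $m$ whose $i$th entry is $1$ if $a_i \in \{P(1,1),P(1,2),P(1,3)\}$ and $0$ otherwise. Two sequences are equivalent if one is a cyclic permutation of the other; two entries of a sequence are adjacent if one immediately follows the other. $P$ is completely reduced if the cycle type of every cycle of $\sigma$ is equivalent to one of: $00$, $01$, $11$, $101$, $111$, $1010$, $1110$, $10101$, $101010$. *)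

(* Defs.v *)
From mathcomp Require Import all_boot.
Set Implicit Arguments. Unset Strict Implicit. Unset Printing Implicit Defensive.

(* An n x n partial array: rows, columns and symbols are indexed by 'I_n
   (row/column/symbol k+1 of the paper is index k here); None = empty cell. *)
Definition parray (n : nat) := {ffun 'I_n * 'I_n -> option 'I_n}.

Definition is_PLS n (P : parray n) : Prop :=
  (forall r c1 c2 s, P (r, c1) = Some s -> P (r, c2) = Some s -> c1 = c2) /\
  (forall c r1 r2 s, P (r1, c) = Some s -> P (r2, c) = Some s -> r1 = r2).

Definition in_PLS23 n (P : parray n) : Prop :=
  is_PLS P /\
  forall r c : 'I_n,
    (P (r, c) != None) = ((nat_of_ord r < 2) || (nat_of_ord c < 3)).

Definition row_idx n (k : nat) : 'I_n.+2 := inord k.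

(* The (1,2)-row-permutation sigma: sigma(P(1,i)) = P(2,i). *)
Definition rowperm n (P : parray n.+2) (s : 'I_n.+2) : 'I_n.+2 :=
  match [pick i : 'I_n.+2 | P (row_idx n 0, i) == Some s] with
  | Some i => odflt s (P (row_idx n 1, i))
  | None => s
  end.

Definition first3 n (P : parray n.+2) (x : 'I_n.+2) : bool :=
  [exists j : 'I_n.+2, (nat_of_ord j < 3) && (P (row_idx n 0, j) == Some x)].

Definition cycle_type n (P : parray n.+2) (a : 'I_n.+2) : seq bool :=
  map (first3 P) (orbit (rowperm P) a).

Definition seq_equiv (s t : seq bool) : Prop := exists k, s = rot k t.

Definition reduced_types : seq (seq bool) :=
  [:: [:: false; false]; [:: false; true]; [:: true; true];
      [:: true; false; true]; [:: true; true; true];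
      [:: true; false; true; false]; [:: true; true; true; false];
      [:: true; false; true; false; true];
      [:: true; false; true; false; true; false]].

Definition completely_reduced n (P : parray n.+2) : Prop :=
  forall a : 'I_n.+2, exists2 t, t \in reduced_types & seq_equiv (cycle_type P a) t.

(* Main.v *)
Require Import Defs.
From mathcomp Require Import all_boot.
From mathcomp Require Import zify.
From Stdlib Require Import Classical.

Lemma equiv_rot (s : seq bool) k : k <= size s -> seq_equiv s (rot k s).
Proof.
move=> hk; exists (size s - k).
by rewrite -rotD ?subnK ?rot_size // subnK.
Qed.

Lemma lemB (t : seq bool) : ~~ infix [:: false; false] (rcons t true) ->
  count (predC id) t <= count id t + ~~ head true t.
Proof.
elim: t => [|x t IH] //=.
case: x => /=.
  move=> /IH; case: (head true t) => /=; lia.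
case: t IH => [|y t] IH //=.
case: y IH => /= IH; [move/IH; lia | by rewrite prefix0s].
Qed.

Lemma size_bound (s : seq bool) : 3 <= size s -> count id s <= 3 ->
  (forall k, k <= size s -> ~~ infix [:: false; false] (rot k s)) -> size s <= 6.
Proof.
move=> h3 hc hno.
case hh: (has id s); last first.
  have := hno 0 (leq0n _); rewrite rot0.
  move: hh; clear hc hno.
  by case: s h3 => [|x [|y s]] //= _; case: x; case: y => //= _; rewrite prefix0s.
case/(has_nthP false): hh => i hi hnth.
have hr : rot i.+1 s = rcons (drop i.+1 s ++ take i s) true.
  by rewrite /rot (take_nth false hi) hnth rcons_cat.
have := hno i.+1 hi; rewrite hr => /lemB.
set t := drop i.+1 s ++ take i s => hB.
have hct : count id (rcons t true) = count id s.
  by rewrite -hr; apply/permP; rewrite perm_rot perm_refl.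
have hst : size (rcons t true) = size s by rewrite -hr size_rot.
rewrite -cats1 count_cat /= addn0 in hct.
rewrite size_rcons in hst.
have := count_predC id t.
case: (head true t) hB => /= hB; lia.
Qed.

Fixpoint allseqs (L : nat) : seq (seq bool) :=
  if L is L'.+1 then [seq b :: t | b <- [:: true; false], t <- allseqs L'] else [:: [::]].

Lemma in_allseqs (s : seq bool) : s \in allseqs (size s).
Proof.
elim: s => [|b s IH] //.
rewrite [size _]/=; rewrite [allseqs _]/= !mem_cat.
by case: b; rewrite (mem_map (fun x y (e : _ :: x = _ :: y) => congr1 behead e)) IH ?orbT.
Qed.

Definition good (s : seq bool) :=
  has (fun t => has (fun k => s == rot k t) (iota 0 (size t))) reduced_types.

Definition cyc_no00 (s : seq bool) :=
  all (fun k => ~~ infix [:: false; false] (rot k s)) (iota 0 (size s).+1).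

Lemma goodP s : good s -> exists2 t, t \in reduced_types & seq_equiv s t.
Proof.
case/hasP => t ht /hasP [k _ /eqP ->]; exists t => //; by exists k.
Qed.

Lemma enum_ok : forall L, L \in [:: 3; 4; 5; 6] ->
  all (fun s => ~~ (cyc_no00 s && (count id s <= 3)) || good s) (allseqs L).
Proof. move=> L; rewrite !inE => /or4P [] /eqP -> ; vm_compute; reflexivity. Qed.

Lemma comb (s : seq bool) : 2 <= size s -> count id s <= 3 ->
  (3 <= size s -> forall k, k <= size s -> ~~ infix [:: false; false] (rot k s)) ->
  exists2 t, t \in reduced_types & seq_equiv s t.
Proof.
move=> h2 hc hno.
case: (leqP 3 (size s)) => h3; last first.
  have e2 : size s = 2 by apply/eqP; rewrite eqn_leq h2 -ltnS h3.
  apply: goodP; case: s e2 {hno hc h2 h3} => [|x [|y [|z s]]] //= _.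
  by case: x; case: y.
have h6 := @size_bound s h3 hc (hno h3).
have hcyc : cyc_no00 s.
  by apply/allP => k; rewrite mem_iota add0n ltnS => /andP [_ hk]; apply: hno.
apply: goodP.
have hL : size s \in [:: 3; 4; 5; 6].
  by rewrite !inE; move: h3 h6; case: (size s) => [|[|[|[|[|[|[|m]]]]]]].
have := allP (@enum_ok _ hL) s (in_allseqs s).
by rewrite hcyc hc.
Qed.

Section PLS.
Variables (n : nat) (P : parray n.+2).
Hypothesis hP : in_PLS23 P.

Let r0 := row_idx n 0.
Let r1 := row_idx n 1.

Lemma r0v : nat_of_ord r0 = 0. Proof. by rewrite /r0 /row_idx inordK. Qed.
Lemma r1v : nat_of_ord r1 = 1. Proof. by rewrite /r1 /row_idx inordK. Qed.

Lemma filled0 c : exists x, P (r0, c) = Some x.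
Proof.
case: hP => _ /(_ r0 c); rewrite r0v /=; case: (P (r0, c)) => [x|] //; by exists x.
Qed.

Lemma filled1 c : exists x, P (r1, c) = Some x.
Proof.
case: hP => _ /(_ r1 c); rewrite r1v /=; case: (P (r1, c)) => [x|] //; by exists x.
Qed.

Lemma rowperm_neq s : rowperm P s != s.
Proof.
case: hP => [[hrow hcol] _].
pose g c := odflt s (P (r0, c)).
have gE c : P (r0, c) = Some (g c).
  by rewrite /g; case: (filled0 c) => x ->.
have ginj : injective g.
  by move=> c1 c2 e; apply: (hrow r0 c1 c2 (g c1)); rewrite gE ?e.
set c := invF ginj s.
have hc : P (r0, c) = Some s by rewrite gE /c f_invF.
rewrite /rowperm; case: pickP => [i /eqP Hi | Hn]; last first.
  by move: (Hn c); rewrite -/r0 hc eqxx.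
case: (filled1 i) => t Ht; rewrite -/r1 Ht /=.
apply/eqP => ets; subst t.
have := hcol i r0 r1 s Hi Ht => e.
by move: r0v r1v; rewrite e => ->.
Qed.

Lemma first3_in x : first3 P x ->
  x \in [:: odflt ord0 (P (r0, inord 0)); odflt ord0 (P (r0, inord 1)); odflt ord0 (P (r0, inord 2))].
Proof.
case/existsP => j /andP [hj /eqP hPj].
move: hPj; rewrite -[j]inord_val -/r0.
case: (nat_of_ord j) hj => [|[|[|m]]] //= _ ->; by rewrite !inE eqxx ?orbT.
Qed.

Lemma ct_count a : count id (cycle_type P a) <= 3.
Proof.
rewrite /cycle_type count_map -size_filter.
have := @uniq_leq_size _ (filter (first3 P) (orbit (rowperm P) a))
  [:: odflt ord0 (P (r0, inord 0)); odflt ord0 (P (r0, inord 1)); odflt ord0 (P (r0, inord 2))].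
apply; first by rewrite filter_uniq // orbit_uniq.
move=> x; rewrite mem_filter => /andP [h _].
exact: first3_in h.
Qed.

Lemma ct_size a : 2 <= size (cycle_type P a).
Proof.
rewrite /cycle_type size_map.
have := @uniq_leq_size _ [:: a; rowperm P a] (orbit (rowperm P) a); apply.
  by rewrite /= andbT inE eq_sym rowperm_neq.
move=> x; rewrite !inE => /orP [] /eqP ->; first exact: in_orbit.
by rewrite -fconnect_orbit fconnect1.
Qed.
End PLS.

Theorem lemma4 (n : nat) (P : parray n.+2) :
  8 <= n.+2 -> in_PLS23 P -> ~ completely_reduced P ->
  exists a : 'I_n.+2,
    3 <= size (cycle_type P a) /\
    exists2 s : seq bool, seq_equiv (cycle_type P a) s & infix [:: false; false] s.
Proof.
move=> _ hP hnot; apply: NNPP => hno; apply: hnot => a.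
apply: comb; [exact: ct_size | exact: ct_count |].
move=> h3 k hk; apply/negP => hinf; apply: hno; exists a; split => //.
by exists (rot k (cycle_type P a)) => //; apply: equiv_rot.
Qed.
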